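(* Let $M_5$ be the five-valued matrix on the set of truth values $V=\{0,1,2,3,4\}$ with designated set $D=\{0\}$ and operations defined as follows (for $x,y\in V$): - Implication $x\to y$ is given by the rows (row $x$ lists $x\to 0, x\to 1, x\to 2, x\to 3, x\to 4$): row $0$: $0,1,1,1,1$; row $1$: $0,0,0,0,0$; row $2$: $0,0,0,0,0$; row $3$: $0,0,4,0,4$; row $4$: $0,0,3,3,0$. - Conjunction: $x\wedge y=0$ if $x=y=0$, and $x\wedge y=1$ otherwise. - Disjunction: $x\vee y=0$ if $x=0$ or $y=0$, and $x\vee y=1$ otherwise. - Negation: $\neg 0=2$, $\neg 1=0$, $\neg 2=0$, $\neg 3=1$, $\neg 4=1$. - Falsum: $\bot=1$. Then: (i) $M_5$ is normal, i.e. for all $x,y\in V$, if $x\in D$ and $(x\to y)\in D$ then $y\in D$; (ii) each of the following formulas takes a designated value under every assignment of values in $V$ to $p,q,r$: (K) $p\to(q\to p)$; peirce $((p\to q)\to p)\to p$; andelimr $(p\wedge q)\to p$; andeliml $(p\wedge q)\to q$; andintro $p\to(q\to(p\wedge q))$; orintror $p\to(p\vee q)$; orintrol $p\to(q\vee p)$; orelim $(p\vee q)\to((p\to r)\to((q\to r)\to r))$; contrap $(p\to\neg q)\to(q\to\neg p)$; notelim $\neg p\to(p\to q)$; falseelim $\bot\to p$; (iii) the formula (S) $(p\to(q\to r))\to((p\to q)\to(p\to r))$ takes the non-designated value $1$ under the assignment $p=3,q=0,r=2$. Consequently, (S) is not derivable from the other eleven axioms listed in (ii) (taken as schemes/with substitution)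 using modus ponens as the sole inference rule.
   Context: Formulas are built from propositional variables using the binary connectives $\to,\wedge,\vee$, the unary connective $\neg$ and the constant $\bot$. A (many-valued) matrix consists of a finite set of truth values, a subset of designated values, and an operation on the truth values for each connective; a formula is evaluated under an assignment of truth values to its variables by interpreting each connective by its operation. A formula is validated by the matrix if it takes a designated value under every assignment. The matrix is called normal if modus ponens preserves designation: whenever $x$ and $x\to y$ are designated, so is $y$. Modus ponens is the rule: from $p$ and $p\to q$ infer $q$. *)

(* Defs.v *)
From mathcomp Require Import all_boot.
Set Implicit Arguments. Unset Strict Implicit. Unset Printing Implicit Defensive.

Inductive form : Type :=
| Var : nat -> form
| Imp : form -> form -> form
| And : form -> form -> form
| Or  : form -> form -> form
| Neg : form -> form
| Bot : form.

Definition V := 'I_5.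
Definition designated (x : V) : bool := (nat_of_ord x == 0%N).

Definition impn (x y : nat) : nat :=
  match x, y with
  | 0, 0 => 0 | 0, _ => 1
  | 1, _ => 0
  | 2, _ => 0
  | 3, 0 => 0 | 3, 1 => 0 | 3, 2 => 4 | 3, 3 => 0 | 3, _ => 4
  | _, 0 => 0 | _, 1 => 0 | _, 2 => 3 | _, 3 => 3 | _, _ => 0
  end.
Definition andn (x y : nat) : nat := if (x == 0) && (y == 0) then 0 else 1.
Definition orn (x y : nat) : nat := if (x == 0) || (y == 0) then 0 else 1.
Definition negn (x : nat) : nat :=
  match x with 0 => 2 | 1 => 0 | 2 => 0 | _ => 1 end.

Definition M5imp (x y : V) : V := inord (impn x y).
Definition M5and (x y : V) : V := inord (andn x y).
Definition M5or  (x y : V) : V := inord (orn x y).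
Definition M5neg (x : V) : V := inord (negn x).
Definition M5bot : V := inord 1.

Fixpoint eval (v : nat -> V) (f : form) : V :=
  match f with
  | Var n => v n
  | Imp a b => M5imp (eval v a) (eval v b)
  | And a b => M5and (eval v a) (eval v b)
  | Or a b => M5or (eval v a) (eval v b)
  | Neg a => M5neg (eval v a)
  | Bot => M5bot
  end.

Definition validated (f : form) : Prop := forall v : nat -> V, designated (eval v f).

Definition normal : Prop :=
  forall x y : V, designated x -> designated (M5imp x y) -> designated y.

Definition axK (p q : form) := Imp p (Imp q p).
Definition axPeirce (p q : form) := Imp (Imp (Imp p q) p) p.
Definition axAndElimR (p q : form) := Imp (And p q) p.
Definition axAndElimL (p q : form) := Imp (And p q) q.
Definition axAndIntro (p q : form) := Imp p (Imp q (And p q)).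
Definition axOrIntroR (p q : form) := Imp p (Or p q).
Definition axOrIntroL (p q : form) := Imp p (Or q p).
Definition axOrElim (p q r : form) :=
  Imp (Or p q) (Imp (Imp p r) (Imp (Imp q r) r)).
Definition axContrap (p q : form) := Imp (Imp p (Neg q)) (Imp q (Neg p)).
Definition axNotElim (p q : form) := Imp (Neg p) (Imp p q).
Definition axFalseElim (p : form) := Imp Bot p.
Definition axS (p q r : form) := Imp (Imp p (Imp q r)) (Imp (Imp p q) (Imp p r)).

Definition eleven_axioms (f : form) : Prop :=
  exists a b c : form,
    f = axK a b \/ f = axPeirce a b \/ f = axAndElimR a b \/ f = axAndElimL a b \/
    f = axAndIntro a b \/ f = axOrIntroR a b \/ f = axOrIntroL a b \/
    f = axOrElim a b c \/ f = axContrap a b \/ f = axNotElim a b \/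
    f = axFalseElim a.

Inductive derivable (Ax : form -> Prop) : form -> Prop :=
| d_ax : forall f, Ax f -> derivable Ax f
| d_mp : forall f g, derivable Ax f -> derivable Ax (Imp f g) -> derivable Ax g.

Definition p := Var 0.
Definition q := Var 1.
Definition r := Var 2.

(* Main.v *)
Require Import Defs.
From mathcomp Require Import all_boot.
Lemma impE x y : nat_of_ord (M5imp x y) = impn x y.
Proof. by rewrite /M5imp inordK //; case: x y => [[|[|[|[|[|?]]]]] ?] [[|[|[|[|[|?]]]]] ?]. Qed.
Lemma andE x y : nat_of_ord (M5and x y) = andn x y.
Proof. by rewrite /M5and inordK // /andn; case: ifP. Qed.
Lemma orE x y : nat_of_ord (M5or x y) = orn x y.
Proof. by rewrite /M5or inordK // /orn; case: ifP. Qed.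
Lemma negE (a : V) : nat_of_ord (M5neg a) = Defs.negn a.
Proof. by rewrite /M5neg inordK //; case: a => [[|[|[|[|[|?]]]]] ?]. Qed.
Lemma botE : nat_of_ord M5bot = 1.
Proof. by rewrite /M5bot inordK. Qed.
Ltac simpl5 := rewrite /designated; repeat rewrite ?impE ?andE ?orE ?negE ?botE.
Ltac cs x := case: x => [[|[|[|[|[|?]]]]] ?] //=.

Lemma normal_ok : normal.
Proof. move=> x y; simpl5; cs x; cs y. Qed.

Lemma sem_ok f : eleven_axioms f -> validated f.
Proof.
move=> [a [b [c H]]] v.
case: H => [->|[->|[->|[->|[->|[->|[->|[->|[->|[->|->]]]]]]]]]]; simpl; simpl5;
  set x := eval v a; set y := eval v b; set z := eval v c; clearbody x y z;
  try (cs x; cs y; cs z; fail); try (cs x; cs y; fail); cs x.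
Qed.

Lemma deriv_ok f : derivable eleven_axioms f -> validated f.
Proof.
elim=> [g /sem_ok //| g h _ IH1 _ IH2] v.
exact: (@normal_ok (eval v g) (eval v h) (IH1 v) (IH2 v)).
Qed.

Theorem mainTheorem1 :
  (* (i) *)
  normal /\
  (* (ii) *)
  (validated (axK p q) /\ validated (axPeirce p q) /\ validated (axAndElimR p q) /\
   validated (axAndElimL p q) /\ validated (axAndIntro p q) /\
   validated (axOrIntroR p q) /\ validated (axOrIntroL p q) /\
   validated (axOrElim p q r) /\ validated (axContrap p q) /\
   validated (axNotElim p q) /\ validated (axFalseElim p)) /\
  (* (iii) *)
  (forall v : nat -> V, nat_of_ord (v 0%N) = 3%N -> nat_of_ord (v 1%N) = 0%N ->
     nat_of_ord (v 2%N) = 2%N -> nat_of_ord (eval v (axS p q r)) = 1%N) /\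
  (* consequence *)
  ~ derivable eleven_axioms (axS p q r).
Proof.
have S : forall v : nat -> V, nat_of_ord (v 0%N) = 3%N -> nat_of_ord (v 1%N) = 0%N ->
     nat_of_ord (v 2%N) = 2%N -> nat_of_ord (eval v (axS p q r)) = 1%N.
  move=> v h0 h1 h2 /=; repeat rewrite ?impE.
  by rewrite h0 h1 h2.
split; first exact: normal_ok.
split.
  have A := sem_ok.
  by repeat split; move=> v; apply: A; exists p, q, r; tauto.
split; first exact: S.
move/deriv_ok => H.
pose v (n : nat) : V := inord (if n == 0 then 3 else if n == 1 then 0 else 2).
have := H v; rewrite /designated (S v) //=; by rewrite inordK.
Qed.
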